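(* Let $X$ be a homogeneous chain that is not simple. The following are equivalent: (1) the topological group $(\mathrm{Aut}(X),\tau_p)$ (respectively $(\mathrm{Aut}(X),\tau_\partial)$) is Roelcke precompact; (2) for every proper regular interval $J$ of $X$ the topological groups $(\mathrm{Aut}(J),\tau_p)$ (respectively $(\mathrm{Aut}(J),\tau_\partial)$) and $(\mathrm{Aut}(X/J),\tau_\partial)$ are Roelcke precompact; (3) there exists a proper regular interval $J$ of $X$ such that the topological groups $(\mathrm{Aut}(J),\tau_p)$ (respectively $(\mathrm{Aut}(J),\tau_\partial)$) and $(\mathrm{Aut}(X/J),\tau_\partial)$ are Roelcke precompact.
   Context: Chain: linearly ordered set; $\mathrm{Aut}(Y)$: group of order-preserving bijections; $X$ homogeneous: $\mathrm{Aut}(X)$ acts transitively. An interval is a convex subset; $J$ is regular if for all $x,y\in J$, $g\in\mathrm{Aut}(X)$, $g(x)\in J\Rightarrow g(y)\in J$; proper if neither a singleton nor $X$. A homogeneous chain is simple if it has no proper regular interval. For a proper regular interval $J$, $X/J$ is the chain of equivalence classes of the relation $x\sim_J y\iff\forall g\in\mathrm{Aut}(X)\,(g(x)\in J\Rightarrow g(y)\in J)$ (these classes are the images of $J$ under automorphisms), with the induced order. $\tau_p$: pointwise convergence topology w.r.t. the order topology; $\tau_\partial$: permutation topology (identity neighbourhood base: pointwise stabilizers of finite sets). Roelcke precompact: the Roelcke uniformity (greatest lower bound of left and right uniformities) is totally bounded. *)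

(* Defs.v *)
From Stdlib Require Import List.
Import ListNotations.
Set Implicit Arguments.

Definition is_chain {T : Type} (lt : T -> T -> Prop) : Prop :=
  (forall x, ~ lt x x) /\
  (forall x y z, lt x y -> lt y z -> lt x z) /\
  (forall x y, lt x y \/ x = y \/ lt y x).

Definition is_aut {T : Type} (lt : T -> T -> Prop) (f : T -> T) : Prop :=
  (forall x y, lt x y -> lt (f x) (f y)) /\
  (exists g : T -> T, (forall x, g (f x) = x) /\ (forall y, f (g y) = y)).

Definition homogeneous {T : Type} (lt : T -> T -> Prop) : Prop :=
  forall x y, exists f, is_aut lt f /\ f x = y.

Definition is_interval {T : Type} (lt : T -> T -> Prop) (J : T -> Prop) : Prop :=
  (exists x, J x) /\
  (forall x y z, J x -> J z -> lt x y -> lt y z -> J y).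

Definition regular_interval {T : Type} (lt : T -> T -> Prop) (J : T -> Prop) : Prop :=
  is_interval lt J /\
  (forall x y g, J x -> J y -> is_aut lt g -> J (g x) -> J (g y)).

Definition proper_set {T : Type} (J : T -> Prop) : Prop :=
  ~ (exists x, forall y, J y <-> y = x) /\ ~ (forall y, J y).

Definition proper_regular_interval {T : Type} (lt : T -> T -> Prop) (J : T -> Prop) : Prop :=
  regular_interval lt J /\ proper_set J.

Definition is_simple {T : Type} (lt : T -> T -> Prop) : Prop :=
  homogeneous lt /\ ~ (exists J, proper_regular_interval lt J).

Definition sub_lt {T : Type} (lt : T -> T -> Prop) (J : T -> Prop)
  (a b : {x : T | J x}) : Prop := lt (proj1_sig a) (proj1_sig b).

(* The chain X/J: equivalence classes of ~_J with the induced order. *)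
Definition simJ {T : Type} (lt : T -> T -> Prop) (J : T -> Prop) (x y : T) : Prop :=
  forall g, is_aut lt g -> J (g x) -> J (g y).

Definition quotJ {T : Type} (lt : T -> T -> Prop) (J : T -> Prop) : Type :=
  {S : T -> Prop | exists x, forall y, S y <-> simJ lt J x y}.

Definition quot_lt {T : Type} (lt : T -> T -> Prop) (J : T -> Prop)
  (S S' : quotJ lt J) : Prop :=
  exists x y, proj1_sig S x /\ proj1_sig S' y /\ lt x y.

(* Order topology: open sets are unions of open intervals/rays (a,b),
   with a, b possibly absent (= unbounded). *)
Definition in_oint {T : Type} (lt : T -> T -> Prop) (a b : option T) (y : T) : Prop :=
  match a with Some a => lt a y | None => True end /\
  match b with Some b => lt y b | None => True end.

Definition order_open {T : Type} (lt : T -> T -> Prop) (O : T -> Prop) : Prop :=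
  forall y, O y -> exists a b, in_oint lt a b y /\ (forall z, in_oint lt a b z -> O z).

(* Identity neighbourhoods (subsets U of T -> T, intersected with Aut). *)
Definition nbhd1_partial {T : Type} (lt : T -> T -> Prop) (U : (T -> T) -> Prop) : Prop :=
  exists A : list T,
    forall g, is_aut lt g -> (forall x, In x A -> g x = x) -> U g.

(* tau_p: pointwise convergence w.r.t. the order topology. *)
Definition nbhd1_pointwise {T : Type} (lt : T -> T -> Prop) (U : (T -> T) -> Prop) : Prop :=
  exists P : list (T * (T -> Prop)),
    (forall p, In p P -> order_open lt (snd p) /\ snd p (fst p)) /\
    (forall g, is_aut lt g -> (forall p, In p P -> snd p (g (fst p))) -> U g).

Inductive topo := Tp | Tpartial.

Definition nbhd1 (t : topo) {T : Type} (lt : T -> T -> Prop) : ((T -> T) -> Prop) -> Prop :=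
  match t with Tp => nbhd1_pointwise lt | Tpartial => nbhd1_partial lt end.

(* Roelcke precompactness: the Roelcke uniformity (meet of left and right
   uniformities, basic entourages {(f,g) | g in U f U}) is totally bounded:
   for each identity neighbourhood U there is a finite F with Aut = U F U. *)
Definition roelcke_precompact (t : topo) {T : Type} (lt : T -> T -> Prop) : Prop :=
  forall U, nbhd1 t lt U ->
    exists F : list (T -> T),
      (forall f, In f F -> is_aut lt f) /\
      (forall g, is_aut lt g ->
         exists f u1 u2, In f F /\ U u1 /\ U u2 /\ is_aut lt u1 /\ is_aut lt u2 /\
           (forall x, g x = u1 (f (u2 x)))).

(* Main.v *)
Require Import Defs.
From Stdlib Require Import List ClassicalEpsilon ProofIrrelevance PropExtensionality FunctionalExtensionality Classical.
Import ListNotations.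


Definition inv {A : Type} (f : A -> A) (y : A) : A :=
  epsilon (inhabits y) (fun x => f x = y).

Section Gen.
Context {A : Type} (ltA : A -> A -> Prop).

Lemma aut_rinv f y : is_aut ltA f -> f (inv f y) = y.
Proof.
  intros [_ [g [H1 H2]]]. unfold inv.
  apply (epsilon_spec (inhabits y) (fun x => f x = y)). exists (g y). auto.
Qed.

Lemma aut_inj f x y : is_aut ltA f -> f x = f y -> x = y.
Proof.
  intros [_ [g [H1 H2]]] E. rewrite <- (H1 x), <- (H1 y), E. reflexivity.
Qed.

Lemma aut_linv f x : is_aut ltA f -> inv f (f x) = x.
Proof. intros H. apply (aut_inj f _ _ H). apply aut_rinv; auto. Qed.

Lemma aut_id : is_aut ltA (fun x => x).
Proof. split; auto. exists (fun x => x). auto. Qed.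

Lemma aut_comp f g : is_aut ltA f -> is_aut ltA g -> is_aut ltA (fun x => f (g x)).
Proof.
  intros [Hf [f' [F1 F2]]] [Hg [g' [G1 G2]]]. split; auto.
  exists (fun y => g' (f' y)). split; intros; [rewrite F1, G1 | rewrite G2, F2]; auto.
Qed.

Lemma aut_ext f g : is_aut ltA f -> (forall x, f x = g x) -> is_aut ltA g.
Proof.
  intros [Hf [f' [F1 F2]]] E. split.
  - intros x y H. rewrite <- !E. auto.
  - exists f'. split; intros; rewrite <- ?E; auto.
Qed.

Hypothesis Hc : is_chain ltA.

Lemma aut_refl f x y : is_aut ltA f -> ltA (f x) (f y) -> ltA x y.
Proof.
  intros Hf H. destruct Hc as [Hirr [Htr Htri]].
  destruct (Htri x y) as [?|[E|E]]; auto.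
  - subst. exfalso. apply (Hirr _ H).
  - exfalso. apply (Hirr (f x)). apply (Htr _ _ _ H). apply Hf; auto.
Qed.

Lemma mk_aut f : (forall x y, ltA x y -> ltA (f x) (f y)) -> (forall y, exists x, f x = y) ->
  is_aut ltA f.
Proof.
  intros Hm Hs. split; auto.
  destruct Hc as [Hirr [Htr Htri]].
  assert (Hi : forall x y, f x = f y -> x = y).
  { intros x y E. destruct (Htri x y) as [H|[H|H]]; auto; apply Hm in H; rewrite E in H;
    destruct (Hirr _ H). }
  exists (inv f). split.
  - intros x. apply Hi. unfold inv.
    apply (epsilon_spec (inhabits (f x)) (fun z => f z = f x)). eauto.
  - intros y. unfold inv. apply (epsilon_spec (inhabits y) (fun z => f z = y)). auto.
Qed.

Lemma aut_inv f : is_aut ltA f -> is_aut ltA (inv f).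
Proof.
  intros Hf. apply mk_aut.
  - intros x y H. apply (aut_refl f); auto. rewrite !aut_rinv; auto.
  - intros y. exists (f y). apply aut_linv; auto.
Qed.

End Gen.


Lemma enum_fns {K V : Type} (C : list K) (F : list V) (dflt : V) :
  exists L : list (K -> V),
    (forall l, In l L -> forall d, (In d C -> In (l d) F) /\ (~ In d C -> l d = dflt)) /\
    (forall s : K -> V, (forall d, In d C -> In (s d) F) -> exists l, In l L /\ forall d, In d C -> l d = s d).
Proof.
  induction C as [|c C IH].
  - exists [fun _ => dflt]. split.
    + intros l [<-|[]] d. simpl. tauto.
    + intros s _. exists (fun _ => dflt). simpl. tauto.
  - destruct IH as [L' [H1 H2]].
    set (upd := fun (l : K -> V) (f : V) (d : K) =>
      if excluded_middle_informative (d = c) then f else l d).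
    exists (flat_map (fun l => map (fun f => upd l f) F) L'). split.
    + intros l Hl d. apply in_flat_map in Hl. destruct Hl as [l' [Hl' Hf]].
      apply in_map_iff in Hf. destruct Hf as [f [<- Hf]]. unfold upd.
      destruct (excluded_middle_informative (d = c)) as [E|E].
      * subst. simpl. split; auto. intros H; exfalso; auto.
      * simpl. split. intros [H|H]; [congruence|]. apply H1; auto.
        intros H. apply H1; auto.
    + intros s Hs. destruct (H2 s) as [l' [Hl' Ha]]. intros; apply Hs; simpl; auto.
      exists (upd l' (s c)). split.
      * apply in_flat_map. exists l'. split; auto. apply in_map. apply Hs. simpl; auto.
      * intros d Hd. unfold upd. destruct (excluded_middle_informative (d = c)) as [E|E].
        subst; auto. apply Ha. destruct Hd; [congruence|auto].
Qed.

Section Main.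
Variable T : Type.
Variable lt : T -> T -> Prop.
Hypothesis Hc : is_chain lt.
Hypothesis Hh : homogeneous lt.
Variable J : T -> Prop.
Hypothesis HJ : proper_regular_interval lt J.
Variable j0 : T.
Hypothesis Hj0 : J j0.

Let sJ := {x : T | J x}.
Let slt := sub_lt lt J.
Let Q := quotJ lt J.
Let qlt := @quot_lt T lt J.

Lemma lt_irr x : ~ lt x x. Proof. destruct Hc as [H _]. auto. Qed.
Lemma lt_trans x y z : lt x y -> lt y z -> lt x z. Proof. destruct Hc as [_ [H _]]. eauto. Qed.
Lemma lt_tri x y : lt x y \/ x = y \/ lt y x. Proof. destruct Hc as [_ [_ H]]. auto. Qed.

Lemma J_conv x y z : J x -> J z -> lt x y -> lt y z -> J y.
Proof. destruct HJ as [[[_ H] _] _]. eauto. Qed.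
Lemma J_reg x y g : J x -> J y -> is_aut lt g -> J (g x) -> J (g y).
Proof. destruct HJ as [[_ H] _]. eauto. Qed.

Lemma sJ_eq (a b : sJ) : proj1_sig a = proj1_sig b -> a = b.
Proof.
  destruct a as [a Ha], b as [b Hb]; simpl; intros E; subst. f_equal. apply proof_irrelevance.
Qed.

Lemma sJ_chain : is_chain slt.
Proof.
  unfold slt, sub_lt. split; [|split].
  - intros x. apply lt_irr.
  - intros x y z. apply lt_trans.
  - intros x y. destruct (lt_tri (proj1_sig x) (proj1_sig y)) as [H|[H|H]]; auto.
    right; left. apply sJ_eq; auto.
Qed.

Definition mkJ (z : T) (d : sJ) : sJ :=
  match excluded_middle_informative (J z) with
  | left H => exist _ z H
  | right _ => d end.

Lemma mkJ_val z d : J z -> proj1_sig (mkJ z d) = z.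
Proof. intros H. unfold mkJ. destruct (excluded_middle_informative (J z)); simpl; tauto. Qed.

Definition sj0 : sJ := exist _ j0 Hj0.

Lemma J_not_single y : J y -> exists x, J x /\ x <> y.
Proof.
  intros Hy. destruct HJ as [_ [Hns _]].
  apply NNPP. intros Hn. apply Hns. exists y. intros z. split.
  - intros Hz. apply NNPP. intros Hzy. apply Hn. eauto.
  - intros ->. auto.
Qed.

Lemma J_above y : J y -> exists b, J b /\ lt y b.
Proof.
  intros Hy. apply NNPP. intros Hn.
  destruct (J_not_single y Hy) as [x [Hx Hxy]].
  assert (Hxl : lt x y).
  { destruct (lt_tri x y) as [H|[H|H]]; auto. contradiction. exfalso. eauto. }
  destruct (Hh y x) as [h [Ha Ehy]].
  assert (Hinv : J (inv h y)).
  { apply (J_reg x y (inv h)); auto. apply aut_inv; auto. rewrite <- Ehy, aut_linv with (ltA:=lt); auto. }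
  apply Hn. exists (inv h y). split; auto.
  apply (aut_refl lt Hc h); auto. rewrite aut_rinv with (ltA:=lt); auto. rewrite Ehy; auto.
Qed.

Lemma J_below y : J y -> exists a, J a /\ lt a y.
Proof.
  intros Hy. apply NNPP. intros Hn.
  destruct (J_not_single y Hy) as [x [Hx Hxy]].
  assert (Hxl : lt y x).
  { destruct (lt_tri x y) as [H|[H|H]]; auto. exfalso; eauto. contradiction. }
  destruct (Hh y x) as [h [Ha Ehy]].
  assert (Hinv : J (inv h y)).
  { apply (J_reg x y (inv h)); auto. apply aut_inv; auto. rewrite <- Ehy, aut_linv with (ltA:=lt); auto. }
  apply Hn. exists (inv h y). split; auto.
  apply (aut_refl lt Hc h); auto. rewrite aut_rinv with (ltA:=lt); auto. rewrite Ehy; auto.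
Qed.


Lemma aut_invX f : is_aut lt f -> is_aut lt (inv f).
Proof. apply aut_inv; auto. Qed.
Lemma rinvX f y : is_aut lt f -> f (inv f y) = y.
Proof. apply aut_rinv. Qed.
Lemma linvX f y : is_aut lt f -> inv f (f y) = y.
Proof. apply aut_linv. Qed.

Lemma simJ_char h x y : is_aut lt h -> J (inv h x) -> (simJ lt J x y <-> J (inv h y)).
Proof.
  intros Ha Hx. split.
  - intros S. apply S; auto. apply aut_invX; auto.
  - intros Hy g Hg Hgx. 
    assert (E : forall z, g z = g (h (inv h z))) by (intros; rewrite rinvX; auto).
    rewrite E. rewrite E in Hgx.
    apply (J_reg (inv h x) (inv h y) (fun z => g (h z))); auto. apply aut_comp; auto.
Qed.

Lemma simJ_ex x : exists h, is_aut lt h /\ J (inv h x).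
Proof.
  destruct (Hh j0 x) as [h [Ha E]]. exists h. split; auto. rewrite <- E, linvX; auto.
Qed.

Lemma simJ_refl x : simJ lt J x x.
Proof. intros g _ H; auto. Qed.

Lemma simJ_sym x y : simJ lt J x y -> simJ lt J y x.
Proof.
  intros S. destruct (simJ_ex x) as [h [Ha Hx]].
  assert (Hy : J (inv h y)) by (apply (proj1 (simJ_char h x y Ha Hx)); auto).
  apply (proj2 (simJ_char h y x Ha Hy)); auto.
Qed.

Lemma simJ_trans x y z : simJ lt J x y -> simJ lt J y z -> simJ lt J x z.
Proof. intros S1 S2 g Hg H. apply S2; auto. Qed.

Definition cl (x : T) : Q := exist _ (simJ lt J x) (ex_intro _ x (fun y => iff_refl _)).
Definition mem (c : Q) (y : T) : Prop := proj1_sig c y.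

Lemma Q_eq (c d : Q) : (forall y, mem c y <-> mem d y) -> c = d.
Proof.
  destruct c as [c Hc'], d as [d Hd]; unfold mem; simpl; intros E.
  assert (c = d) by (apply functional_extensionality; intros; apply propositional_extensionality; auto).
  subst. f_equal. apply proof_irrelevance.
Qed.

Lemma mem_cl_self x : mem (cl x) x.
Proof. apply simJ_refl. Qed.

Lemma cl_of_mem c y : mem c y -> cl y = c.
Proof.
  intros H. apply Q_eq. intros z. destruct c as [S [x Hx]]. unfold mem in *; simpl in *.
  rewrite Hx in H |- *. split; intros; eauto using simJ_trans, simJ_sym.
Qed.

Lemma mem_iff c y : mem c y <-> cl y = c.
Proof. split. apply cl_of_mem. intros <-. apply mem_cl_self. Qed.

Lemma cl_eq x y : simJ lt J x y -> cl x = cl y.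
Proof. intros S. symmetry. apply cl_of_mem. apply S. Qed.

Lemma cl_eq_iff x y : cl x = cl y <-> simJ lt J x y.
Proof. split. intros E. rewrite <- mem_iff in E. apply simJ_sym. apply E. apply cl_eq. Qed.

Definition rep (c : Q) : T := epsilon (inhabits j0) (fun x => mem c x).
Lemma rep_mem c : mem c (rep c).
Proof.
  unfold rep. apply (epsilon_spec (inhabits j0) (fun x => mem c x)).
  destruct c as [S [x Hx]]. exists x. unfold mem; simpl. apply Hx. apply simJ_refl.
Qed.
Lemma cl_rep c : cl (rep c) = c.
Proof. apply cl_of_mem, rep_mem. Qed.

Definition e (c : Q) : T -> T := epsilon (inhabits (fun x : T => x)) (fun h => is_aut lt h /\ h j0 = rep c).
Lemma e_spec c : is_aut lt (e c) /\ e c j0 = rep c.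
Proof.
  unfold e. apply (epsilon_spec (inhabits (fun x : T => x)) (fun h => is_aut lt h /\ h j0 = rep c)).
  apply Hh.
Qed.
Lemma e_aut c : is_aut lt (e c). Proof. apply e_spec. Qed.

Lemma mem_e c y : mem c y <-> J (inv (e c) y).
Proof.
  rewrite <- (cl_rep c) at 1. change (simJ lt J (rep c) y <-> J (inv (e c) y)).
  apply simJ_char. apply e_aut. destruct (e_spec c) as [Ha E]. rewrite <- E, linvX; auto.
Qed.

Lemma cl_e c j : J j -> cl (e c j) = c.
Proof. intros H. apply cl_of_mem. apply mem_e. rewrite linvX; auto. apply e_aut. Qed.

Definition r (x : T) : sJ := mkJ (inv (e (cl x)) x) sj0.
Lemma r_val x : proj1_sig (r x) = inv (e (cl x)) x.
Proof. unfold r. apply mkJ_val. apply mem_e. apply mem_cl_self. Qed.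
Lemma e_r x : e (cl x) (proj1_sig (r x)) = x.
Proof. rewrite r_val. apply rinvX, e_aut. Qed.
Lemma r_e c (j : sJ) : r (e c (proj1_sig j)) = j.
Proof.
  apply sJ_eq. rewrite r_val, cl_e by apply proj2_sig. apply linvX, e_aut.
Qed.

Lemma mem_conv c a b y : mem c a -> mem c b -> lt a y -> lt y b -> mem c y.
Proof.
  rewrite !mem_e. intros Ha Hb H1 H2. apply (J_conv _ _ _ Ha Hb);
  apply (aut_invX _ (e_aut c)); auto.
Qed.

Lemma cl_order a b a' b' : cl a <> cl b -> lt a b -> cl a' = cl a -> cl b' = cl b -> lt a' b'.
Proof.
  intros Hne Hab Ha Hb. rewrite <- !mem_iff in Ha, Hb.
  assert (Ha0 : mem (cl a) a) by apply mem_cl_self.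
  assert (Hb0 : mem (cl b) b) by apply mem_cl_self.
  destruct (lt_tri a' b') as [H|[H|H]]; auto; exfalso.
  - subst. apply Hne. rewrite <- (cl_of_mem _ _ Ha), <- (cl_of_mem _ _ Hb). auto.
  - assert (Eb : cl b' = cl b) by (apply cl_of_mem; auto).
    destruct (lt_tri a b') as [H2|[H2|H2]].
    + apply Hne. rewrite <- Eb. symmetry. apply cl_of_mem. apply (mem_conv _ a a'); auto.
    + subst. apply Hne. auto.
    + apply Hne. apply cl_of_mem. apply (mem_conv _ b' b); auto.
Qed.


Lemma aut_simJ g x y : is_aut lt g -> simJ lt J x y -> simJ lt J (g x) (g y).
Proof. intros Hg S h Ha H. apply (S (fun z => h (g z))); auto. apply aut_comp; auto. Qed.

Definition pi (g : T -> T) (c : Q) : Q := cl (g (rep c)).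

Lemma pi_cl g x : is_aut lt g -> pi g (cl x) = cl (g x).
Proof.
  intros Hg. unfold pi. apply cl_eq. apply aut_simJ; auto. apply cl_eq_iff. apply cl_rep.
Qed.

Lemma pi_ext g g' c : (forall x, g x = g' x) -> pi g c = pi g' c.
Proof. intros E. unfold pi. rewrite E. auto. Qed.

Lemma pi_aut g : is_aut lt g -> is_aut qlt (pi g).
Proof.
  intros Hg. split.
  - intros c d [x [y [Hx [Hy Hxy]]]]. exists (g x), (g y).
    change (mem c x) in Hx. change (mem d y) in Hy.
    rewrite mem_iff in Hx, Hy. subst.
    split; [|split]. change (mem (pi g (cl x)) (g x)). rewrite mem_iff, pi_cl; auto.
    change (mem (pi g (cl y)) (g y)). rewrite mem_iff, pi_cl; auto.
    apply Hg; auto.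
  - exists (pi (inv g)). split; intros c; rewrite <- (cl_rep c); rewrite !pi_cl; auto;
    try apply aut_invX; auto; rewrite ?linvX, ?rinvX; auto.
Qed.

Definition build (psi : Q -> Q) (ka : Q -> sJ -> sJ) (x : T) : T :=
  e (psi (cl x)) (proj1_sig (ka (cl x) (r x))).

Lemma cl_build psi ka x : cl (build psi ka x) = psi (cl x).
Proof. unfold build. apply cl_e. apply proj2_sig. Qed.

Lemma r_build psi ka x : r (build psi ka x) = ka (cl x) (r x).
Proof. unfold build. apply r_e. Qed.

Lemma build_aut psi ka : is_aut qlt psi -> (forall c, is_aut slt (ka c)) ->
  is_aut lt (build psi ka).
Proof.
  intros Hp Hk. apply mk_aut; auto.
  - intros x y Hxy. destruct (classic (cl x = cl y)) as [E|E].
    + unfold build. rewrite <- E. apply e_aut. apply Hk. unfold slt, sub_lt.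
      rewrite !r_val, <- E. apply aut_invX; auto. apply e_aut.
    + assert (Hq : qlt (cl x) (cl y)).
      { exists x, y. split; [apply mem_cl_self|split; [apply mem_cl_self|auto]]. }
      destruct Hp as [Hpm Hpi]. generalize (Hpm _ _ Hq). intros [x' [y' [H1 [H2 H3]]]].
      change (mem (psi (cl x)) x') in H1. change (mem (psi (cl y)) y') in H2.
      rewrite mem_iff in H1, H2.
      apply (cl_order x' y'); auto.
      * rewrite H1, H2. intros E'. apply E. apply (aut_inj qlt psi); auto. split; auto.
      * rewrite cl_build; auto.
      * rewrite cl_build; auto.
  - intros y. set (c := inv psi (cl y)).
    exists (e c (proj1_sig (inv (ka c) (r y)))).
    unfold build. rewrite r_e. rewrite cl_e by apply proj2_sig. unfold c.
    rewrite (aut_rinv qlt); auto. rewrite (aut_rinv slt); auto. apply e_r.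
Qed.

Definition res (h : T -> T) (j : sJ) : sJ := mkJ (h (proj1_sig j)) j.

Lemma res_val h j : is_aut lt h -> J (h j0) -> proj1_sig (res h j) = h (proj1_sig j).
Proof.
  intros Ha H0. unfold res. apply mkJ_val. apply (J_reg j0); auto. apply proj2_sig.
Qed.

Lemma res_aut h : is_aut lt h -> J (h j0) -> is_aut slt (res h).
Proof.
  intros Ha H0. apply mk_aut. apply sJ_chain.
  - intros x y H. unfold slt, sub_lt. rewrite !res_val; auto. apply Ha; auto.
  - intros y. assert (Hy : J (inv h (proj1_sig y))).
    { apply (J_reg (h j0) (proj1_sig y) (inv h)); auto. apply proj2_sig. apply aut_invX; auto.
      rewrite linvX; auto. }
    exists (exist _ _ Hy). apply sJ_eq. rewrite res_val; auto. simpl. apply rinvX; auto.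
Qed.

Definition fib (g : T -> T) (c : Q) : sJ -> sJ :=
  res (fun z => inv (e (pi g c)) (g (e c z))).

Lemma fib_J0 g c : is_aut lt g -> J (inv (e (pi g c)) (g (e c j0))).
Proof.
  intros Hg. apply mem_e. apply mem_iff. rewrite <- pi_cl; auto. rewrite cl_e; auto.
Qed.

Lemma fib_aut g c : is_aut lt g -> is_aut slt (fib g c).
Proof.
  intros Hg. apply res_aut. apply aut_comp. apply aut_invX, e_aut. apply aut_comp; auto. apply e_aut.
  apply fib_J0; auto.
Qed.

Lemma decomp g x : is_aut lt g -> g x = build (pi g) (fib g) x.
Proof.
  intros Hg. unfold build, fib. rewrite res_val.
  - rewrite e_r. rewrite rinvX; auto. apply e_aut.
  - apply aut_comp. apply aut_invX, e_aut. apply aut_comp; auto. apply e_aut.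
  - apply fib_J0; auto.
Qed.

Definition ext (gJ : sJ -> sJ) (x : T) : T :=
  match excluded_middle_informative (J x) with
  | left H => proj1_sig (gJ (exist _ x H))
  | right _ => x end.

Lemma ext_in gJ x (H : J x) : ext gJ x = proj1_sig (gJ (exist _ x H)).
Proof.
  unfold ext. destruct (excluded_middle_informative (J x)) as [H'|H']; [|contradiction].
  do 3 f_equal. apply proof_irrelevance.
Qed.

Lemma ext_out gJ x : ~ J x -> ext gJ x = x.
Proof. unfold ext. destruct (excluded_middle_informative (J x)); tauto. Qed.

Lemma out_above x y z : J x -> ~ J y -> lt x y -> J z -> lt z y.
Proof.
  intros Hx Hy Hxy Hz. destruct (lt_tri z y) as [H|[H|H]]; auto; exfalso.
  subst; auto. apply Hy. apply (J_conv x y z); auto.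
Qed.

Lemma out_below x y z : ~ J x -> J y -> lt x y -> J z -> lt x z.
Proof.
  intros Hx Hy Hxy Hz. destruct (lt_tri x z) as [H|[H|H]]; auto; exfalso.
  subst; auto. apply Hx. apply (J_conv z x y); auto.
Qed.

Lemma ext_aut gJ : is_aut slt gJ -> is_aut lt (ext gJ).
Proof.
  intros Hg. apply mk_aut; auto.
  - intros x y Hxy. destruct (classic (J x)) as [Hx|Hx]; destruct (classic (J y)) as [Hy|Hy].
    + rewrite (ext_in _ x Hx), (ext_in _ y Hy). apply Hg. exact Hxy.
    + rewrite (ext_in _ x Hx), (ext_out _ y Hy). apply (out_above x); auto. apply proj2_sig.
    + rewrite (ext_out _ x Hx), (ext_in _ y Hy). apply (out_below x y); auto. apply proj2_sig.
    + rewrite (ext_out _ x Hx), (ext_out _ y Hy). auto.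
  - intros y. destruct (classic (J y)) as [Hy|Hy].
    + remember (inv gJ (exist _ y Hy)) as x eqn:Ex. destruct x as [x0 Hx0]. exists x0.
      rewrite (ext_in _ _ Hx0). rewrite Ex, (aut_rinv slt); auto.
    + exists y. apply ext_out; auto.
Qed.


Lemma open_ext {A : Type} (ltA : A -> A -> Prop) (O O' : A -> Prop) :
  (forall x, O x <-> O' x) -> order_open ltA O -> order_open ltA O'.
Proof.
  intros E H y Hy. apply E in Hy. destruct (H y Hy) as [a [b [H1 H2]]].
  exists a, b. split; auto. intros z Hz. apply E; auto.
Qed.

Lemma open_pre h O : is_aut lt h -> order_open lt O -> order_open lt (fun x => O (h x)).
Proof.
  intros Ha HO y Hy. destruct (HO _ Hy) as [a [b [[H1 H2] H3]]].
  exists (option_map (inv h) a), (option_map (inv h) b). split.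
  - split.
    + destruct a as [a|]; simpl in *; auto. apply (aut_refl lt Hc h); auto. rewrite rinvX; auto.
    + destruct b as [b|]; simpl in *; auto. apply (aut_refl lt Hc h); auto. rewrite rinvX; auto.
  - intros z [Z1 Z2]. apply H3. split.
    + destruct a as [a|]; simpl in *; auto. rewrite <- (rinvX h a); auto. apply Ha; auto.
    + destruct b as [b|]; simpl in *; auto. rewrite <- (rinvX h b); auto. apply Ha; auto.
Qed.

Lemma J_open : order_open lt J.
Proof.
  intros y Hy. destruct (J_below y Hy) as [a [Ha Hay]]. destruct (J_above y Hy) as [b [Hb Hyb]].
  exists (Some a), (Some b). split. split; auto. intros z [Z1 Z2]. apply (J_conv a z b); auto.
Qed.

Lemma mem_open c : order_open lt (mem c).
Proof.
  apply (open_ext lt (fun x => J (inv (e c) x))). intros; rewrite mem_e; tauto.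
  apply open_pre. apply aut_invX, e_aut. apply J_open.
Qed.

Definition lowT (a : option T) (z : T) : Prop := match a with Some a0 => lt a0 z | None => True end.
Definition uppT (b : option T) (z : T) : Prop := match b with Some b0 => lt z b0 | None => True end.
Definition lowS (a : option sJ) (z : T) : Prop := match a with Some a0 => lt (proj1_sig a0) z | None => True end.
Definition uppS (b : option sJ) (z : T) : Prop := match b with Some b0 => lt z (proj1_sig b0) | None => True end.

Lemma low_sub a y : J y -> lowT a y -> exists a', lowS a' y /\ forall z, J z -> lowS a' z -> lowT a z.
Proof.
  intros Hy H. destruct a as [a0|].
  - destruct (classic (J a0)) as [Ha|Ha].
    + exists (Some (exist _ a0 Ha)). simpl. split; auto.
    + exists None. simpl. split; auto. intros z Hz _. destruct (lt_tri a0 z) as [E|[E|E]]; auto;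
      exfalso; [subst; auto|]. apply Ha. apply (J_conv z a0 y); auto.
  - exists None. simpl; auto.
Qed.

Lemma upp_sub b y : J y -> uppT b y -> exists b', uppS b' y /\ forall z, J z -> uppS b' z -> uppT b z.
Proof.
  intros Hy H. destruct b as [b0|].
  - destruct (classic (J b0)) as [Hb|Hb].
    + exists (Some (exist _ b0 Hb)). simpl. split; auto.
    + exists None. simpl. split; auto. intros z Hz _. destruct (lt_tri z b0) as [E|[E|E]]; auto;
      exfalso; [subst; auto|]. apply Hb. apply (J_conv y b0 z); auto.
  - exists None. simpl; auto.
Qed.

Lemma sub_open O : order_open lt O -> order_open slt (fun j : sJ => O (proj1_sig j)).
Proof.
  intros HO y Hy. destruct (HO _ Hy) as [a [b [[H1 H2] H3]]].
  destruct (low_sub a (proj1_sig y) (proj2_sig y) H1) as [a' [A1 A2]].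
  destruct (upp_sub b (proj1_sig y) (proj2_sig y) H2) as [b' [B1 B2]].
  exists a', b'. split.
  - split; [destruct a' | destruct b']; simpl in *; auto.
  - intros z [Z1 Z2]. apply H3. split.
    + apply (A2 _ (proj2_sig z)). destruct a'; simpl in *; auto.
    + apply (B2 _ (proj2_sig z)). destruct b'; simpl in *; auto.
Qed.

Lemma low_hat (a : option sJ) x : J x -> lowS a x -> exists l, J l /\ lt l x /\ forall z, lt l z -> lowS a z.
Proof.
  intros Hx H. destruct a as [a1|]; simpl in *.
  - exists (proj1_sig a1). split; [apply proj2_sig|auto].
  - destruct (J_below x Hx) as [l [Hl1 Hl2]]. exists l; auto.
Qed.

Lemma upp_hat (b : option sJ) x : J x -> uppS b x -> exists u, J u /\ lt x u /\ forall z, lt z u -> uppS b z.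
Proof.
  intros Hx H. destruct b as [b1|]; simpl in *.
  - exists (proj1_sig b1). split; [apply proj2_sig|auto].
  - destruct (J_above x Hx) as [l [Hl1 Hl2]]. exists l; auto.
Qed.

Definition hat (O' : sJ -> Prop) (x : T) : Prop := exists H : J x, O' (exist _ x H).

Lemma hat_open O' : order_open slt O' -> order_open lt (hat O').
Proof.
  intros HO x [Hx Hx']. destruct (HO _ Hx') as [a [b [[H1 H2] H3]]].
  destruct (low_hat a x Hx) as [l [L1 [L2 L3]]]. destruct a; simpl in *; auto.
  destruct (upp_hat b x Hx) as [u [U1 [U2 U3]]]. destruct b; simpl in *; auto.
  exists (Some l), (Some u). split. split; auto.
  intros z [Z1 Z2]. simpl in Z1, Z2. assert (Hz : J z) by (apply (J_conv l z u); auto).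
  exists Hz. apply H3. split.
  - generalize (L3 z Z1). destruct a; simpl; auto.
  - generalize (U3 z Z2). destruct b; simpl; auto.
Qed.


Lemma nbhdA t UJ : nbhd1 t slt UJ ->
  exists UX, nbhd1 t lt UX /\ forall u, is_aut lt u -> UX u -> J (u j0) /\ UJ (res u).
Proof.
  destruct t; simpl.
  - intros [P' [HP1 HP2]].
    set (PX := (j0, J) :: map (fun p : sJ * (sJ -> Prop) => (proj1_sig (fst p), hat (snd p))) P').
    exists (fun g => forall p, In p PX -> snd p (g (fst p))). split.
    + exists PX. split; auto. intros p Hp. destruct Hp as [<-|Hp]; simpl.
      * split; auto. apply J_open.
      * apply in_map_iff in Hp. destruct Hp as [q [<- Hq]]. simpl. split.
        apply hat_open. apply HP1; auto.
        destruct (HP1 q Hq) as [_ H]. destruct q as [[x Hx] O]. simpl in *. exists Hx. auto.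
    + intros u Hu HUX. assert (H0 : J (u j0)) by (apply (HUX (j0, J)); left; auto).
      split; auto. apply HP2. apply res_aut; auto.
      intros p Hp. assert (Hm : In (proj1_sig (fst p), hat (snd p)) PX).
      { right. apply in_map_iff. exists p; auto. }
      destruct (HUX _ Hm) as [Hx HO]. simpl in *.
      replace (res u (fst p)) with (exist J (u (proj1_sig (fst p))) Hx); auto.
      apply sJ_eq. rewrite res_val; auto.
  - intros [A' HA].
    set (AX := j0 :: map (@proj1_sig T J) A').
    exists (fun g => forall x, In x AX -> g x = x). split.
    + exists AX. auto.
    + intros u Hu HUX. assert (H0 : u j0 = j0) by (apply HUX; left; auto).
      assert (H0' : J (u j0)) by (rewrite H0; auto).
      split; auto. apply HA. apply res_aut; auto.
      intros x Hx. apply sJ_eq. rewrite res_val; auto. apply HUX. right. apply in_map; auto.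
Qed.

Definition resF (f : T -> T) : sJ -> sJ :=
  match excluded_middle_informative (is_aut lt f /\ J (f j0)) with
  | left _ => res f | right _ => fun j => j end.

Lemma resF_eq f : is_aut lt f -> J (f j0) -> resF f = res f.
Proof. intros. unfold resF. destruct (excluded_middle_informative _); tauto. Qed.

Lemma resF_aut f : is_aut slt (resF f).
Proof.
  unfold resF. destruct (excluded_middle_informative _) as [[H1 H2]|_].
  apply res_aut; auto. apply aut_id.
Qed.

Lemma partA t : roelcke_precompact t lt -> roelcke_precompact t slt.
Proof.
  intros RP UJ HU. destruct (nbhdA t UJ HU) as [UX [HUX K]].
  destruct (RP UX HUX) as [FX [HF HD]].
  exists (map resF FX). split.
  - intros f' Hf'. apply in_map_iff in Hf'. destruct Hf' as [f [<- _]]. apply resF_aut.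
  - intros g Hg. destruct (HD (ext g) (ext_aut g Hg)) as [f [u1 [u2 [Hf [U1 [U2 [A1 [A2 E]]]]]]]].
    destruct (K u1 A1 U1) as [J1 K1]. destruct (K u2 A2 U2) as [J2 K2].
    assert (Af : is_aut lt f) by auto.
    assert (Jw : J (inv u2 j0)).
    { apply (J_reg (u2 j0) j0 (inv u2)); auto. apply aut_invX; auto. rewrite linvX; auto. }
    assert (Jf : J (f j0)).
    { assert (H1 : J (u1 (f j0))).
      { rewrite <- (rinvX u2 j0) at 1; auto. rewrite <- E. rewrite (ext_in _ _ Jw). apply proj2_sig. }
      rewrite <- (linvX u1 (f j0)); auto. apply (J_reg (u1 j0) (u1 (f j0)) (inv u1)); auto.
      apply aut_invX; auto. rewrite linvX; auto. }
    exists (resF f), (res u1), (res u2). split; [apply in_map; auto|].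
    split; auto. split; auto. split; [apply res_aut; auto|]. split; [apply res_aut; auto|].
    intros j. rewrite resF_eq; auto. apply sJ_eq. rewrite !res_val; auto.
    rewrite <- E. destruct j as [x Hx]. simpl. rewrite (ext_in _ _ Hx). auto.
Qed.


Lemma nbhdB t (C : list Q) :
  exists UX, nbhd1 t lt UX /\ forall u, is_aut lt u -> UX u -> forall c, In c C -> pi u c = c.
Proof.
  destruct t; simpl.
  - set (PX := map (fun c => (rep c, mem c)) C).
    exists (fun g => forall p, In p PX -> snd p (g (fst p))). split.
    + exists PX. split; auto. intros p Hp. apply in_map_iff in Hp. destruct Hp as [c [<- _]].
      simpl. split. apply mem_open. apply rep_mem.
    + intros u Hu HUX c Hc'. unfold pi. apply cl_of_mem.
      apply (HUX (rep c, mem c)). apply in_map_iff. exists c; auto.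
  - exists (fun g => forall x, In x (map rep C) -> g x = x). split.
    + exists (map rep C). auto.
    + intros u Hu HUX c Hc'. unfold pi. rewrite HUX. apply cl_rep. apply in_map; auto.
Qed.

Lemma pi_build psi ka c : pi (build psi ka) c = psi c.
Proof. unfold pi. rewrite cl_build, cl_rep. auto. Qed.

Lemma partB t : roelcke_precompact t lt -> roelcke_precompact Tpartial qlt.
Proof.
  intros RP UQ [C HC]. destruct (nbhdB t C) as [UX [HUX K]].
  destruct (RP UX HUX) as [FX [HF HD]].
  exists (map pi FX). split.
  - intros f' Hf'. apply in_map_iff in Hf'. destruct Hf' as [f [<- Hf]]. apply pi_aut; auto.
  - intros psi Hpsi.
    assert (Hl : is_aut lt (build psi (fun _ j => j))).
    { apply build_aut; auto. intros; apply aut_id. }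
    destruct (HD _ Hl) as [f [u1 [u2 [Hf [U1 [U2 [A1 [A2 E]]]]]]]].
    exists (pi f), (pi u1), (pi u2). split; [apply in_map; auto|].
    split; [apply HC; [apply pi_aut; auto| apply K; auto]|].
    split; [apply HC; [apply pi_aut; auto| apply K; auto]|].
    split; [apply pi_aut; auto|]. split; [apply pi_aut; auto|].
    intros c. rewrite <- (pi_build psi (fun _ j => j) c). rewrite (pi_ext _ _ c E).
    unfold pi at 4. rewrite !pi_cl; auto.
Qed.


Lemma nbhdC t UX : nbhd1 t lt UX ->
  exists (xs : list T) (UJb : (sJ -> sJ) -> Prop), nbhd1 t slt UJb /\ UJb (fun j => j) /\
    forall psi ka, is_aut qlt psi -> (forall c, is_aut slt (ka c)) ->
      (forall c, In c (map cl xs) -> psi c = c) -> (forall c, In c (map cl xs) -> UJb (ka c)) ->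
      UX (build psi ka).
Proof.
  destruct t; simpl.
  - intros [P [HP1 HP2]].
    set (PJ := map (fun p : T * (T -> Prop) => (r (fst p), fun j : sJ => snd p (e (cl (fst p)) (proj1_sig j)))) P).
    assert (HPJ : forall p, In p PJ -> order_open slt (snd p) /\ snd p (fst p)).
    { intros p Hp. apply in_map_iff in Hp. destruct Hp as [q [<- Hq]]. simpl. split.
      - apply (sub_open (fun x => snd q (e (cl (fst q)) x))). apply open_pre. apply e_aut. apply HP1; auto.
      - rewrite e_r. apply HP1; auto. }
    exists (map fst P), (fun g => forall p, In p PJ -> snd p (g (fst p))). split; [|split].
    + exists PJ. split; auto.
    + intros p Hp. apply HPJ; auto.
    + intros psi ka Hpsi Hka Hfix HU. apply HP2. apply build_aut; auto.
      intros p Hp. assert (Hin : In (cl (fst p)) (map cl (map fst P))).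
      { apply in_map. apply in_map. auto. }
      unfold build. rewrite (Hfix _ Hin).
      apply (HU _ Hin (r (fst p), fun j : sJ => snd p (e (cl (fst p)) (proj1_sig j)))).
      apply in_map_iff. exists p; auto.
  - intros [A HA]. exists A, (fun g => forall b, In b (map r A) -> g b = b). split; [|split].
    + exists (map r A). auto.
    + auto.
    + intros psi ka Hpsi Hka Hfix HU. apply HA. apply build_aut; auto.
      intros x Hx. assert (Hin : In (cl x) (map cl A)) by (apply in_map; auto).
      unfold build. rewrite (Hfix _ Hin). rewrite (HU _ Hin). apply e_r. apply in_map; auto.
Qed.



Lemma partC t : roelcke_precompact t slt -> roelcke_precompact Tpartial qlt ->
  roelcke_precompact t lt.
Proof.
  intros RPJ RPQ UX HUX.
  destruct (nbhdC t UX HUX) as [xs [UJb [HUJ [Hid K]]]].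
  set (C := map cl xs).
  set (VQ := fun v : Q -> Q => forall c, In c C -> v c = c).
  assert (HVQ : nbhd1 Tpartial qlt VQ) by (exists C; auto).
  destruct (RPQ VQ HVQ) as [FQ [HFQ HDQ]].
  destruct (RPJ UJb HUJ) as [FJ [HFJ HDJ]].
  destruct (enum_fns C FJ (fun j : sJ => j)) as [L [HL1 HL2]].
  exists (flat_map (fun ph => map (fun l => build ph l) L) FQ). split.
  - intros f Hf. apply in_flat_map in Hf. destruct Hf as [ph [Hph Hf]].
    apply in_map_iff in Hf. destruct Hf as [l [<- Hl]]. apply build_aut; auto.
    intros c. destruct (classic (In c C)) as [Hc'|Hc'].
    + apply HFJ. apply (HL1 l Hl c); auto.
    + rewrite (proj2 (HL1 l Hl c) Hc'). apply aut_id.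
  - intros g Hg.
    destruct (HDQ (pi g) (pi_aut g Hg)) as [ph [v1 [v2 [Hph [V1 [V2 [Av1 [Av2 Eq]]]]]]]].
    set (Pd := fun d (p : (sJ -> sJ) * ((sJ -> sJ) * (sJ -> sJ))) =>
      In (fst p) FJ /\ UJb (fst (snd p)) /\ UJb (snd (snd p)) /\ is_aut slt (fst (snd p)) /\
      is_aut slt (snd (snd p)) /\ forall x, fib g d x = fst (snd p) (fst p (snd (snd p) x))).
    assert (Hch : exists ch, forall d, Pd d (ch d)).
    { exists (fun d => epsilon (inhabits ((fun j : sJ => j), ((fun j : sJ => j), (fun j : sJ => j)))) (Pd d)).
      intros d. apply epsilon_spec.
      destruct (HDJ (fib g d) (fib_aut g d Hg)) as [f [b [a [Hf [Ub [Ua [Ab [Aa E]]]]]]]].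
      exists (f, (b, a)). unfold Pd; simpl. tauto. }
    destruct Hch as [ch Hch].
    destruct (HL2 (fun d => fst (ch d))) as [l [Hl Hag]].
    { intros d _. apply (Hch d). }
    set (al := fun c => if excluded_middle_informative (In c C) then snd (snd (ch c)) else fib g c).
    set (be := fun c => if excluded_middle_informative (In (inv ph c) C) then fst (snd (ch (inv ph c)))
                        else (fun j : sJ => j)).
    assert (Aal : forall c, is_aut slt (al c)).
    { intros c. unfold al. destruct (excluded_middle_informative _). apply (Hch c). apply fib_aut; auto. }
    assert (Abe : forall c, is_aut slt (be c)).
    { intros c. unfold be. destruct (excluded_middle_informative _). apply (Hch (inv ph c)). apply aut_id. }
    assert (Aph : is_aut qlt ph) by auto.
    exists (build ph l), (build v1 be), (build v2 al). split.
    { apply in_flat_map. exists ph. split; auto. apply in_map; auto. }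
    split.
    { apply K; auto. intros c Hc'. unfold be. destruct (excluded_middle_informative _). apply (Hch (inv ph c)). auto. }
    split.
    { apply K; auto. intros c Hc'. unfold al. destruct (excluded_middle_informative _). apply (Hch c). contradiction. }
    split; [apply build_aut; auto|]. split; [apply build_aut; auto|].
    intros x. rewrite decomp; auto.
    set (z := build v2 al x). set (y := build ph l z).
    assert (Ez1 : cl z = v2 (cl x)) by apply cl_build.
    assert (Ez2 : r z = al (cl x) (r x)) by apply r_build.
    assert (Ey1 : cl y = ph (cl z)) by apply cl_build.
    assert (Ey2 : r y = l (cl z) (r z)) by apply r_build.
    unfold build at 1 2. rewrite Ey1, Ey2, Ez1, Ez2.
    rewrite Eq. f_equal. f_equal.
    destruct (classic (In (cl x) C)) as [Hx|Hx].
    + rewrite (V2 _ Hx). unfold be. rewrite (aut_linv qlt); auto.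
      destruct (excluded_middle_informative _); [|contradiction].
      rewrite Hag; auto. unfold al. destruct (excluded_middle_informative _); [|contradiction].
      apply (Hch (cl x)).
    + assert (Hx2 : ~ In (v2 (cl x)) C).
      { intros H. apply Hx. rewrite <- (aut_inj qlt v2 (v2 (cl x)) (cl x)); auto. }
      unfold be. rewrite (aut_linv qlt); auto.
      destruct (excluded_middle_informative _); [contradiction|].
      rewrite (proj2 (HL1 l Hl _) Hx2). unfold al.
      destruct (excluded_middle_informative _); [contradiction|]. auto.
Qed.

End Main.


Lemma J_witness (T : Type) (lt : T -> T -> Prop) (J : T -> Prop) :
  proper_regular_interval lt J -> exists j0, J j0.
Proof. intros [[[H _] _] _]. exact H. Qed.

Theorem theorem5p2 (T : Type) (lt : T -> T -> Prop) (t : topo) :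
  is_chain lt -> homogeneous lt -> ~ is_simple lt ->
  (roelcke_precompact t lt <->
     (forall J : T -> Prop, proper_regular_interval lt J ->
        roelcke_precompact t (@sub_lt T lt J) /\
        roelcke_precompact Tpartial (@quot_lt T lt J))) /\
  (roelcke_precompact t lt <->
     (exists J : T -> Prop, proper_regular_interval lt J /\
        roelcke_precompact t (@sub_lt T lt J) /\
        roelcke_precompact Tpartial (@quot_lt T lt J))).
Proof.
  intros Hc Hh Hns.
  assert (HexJ : exists J, proper_regular_interval lt J).
  { apply NNPP. intros Hn. apply Hns. split; auto. }
  destruct HexJ as [J0 HJ0].
  assert (Fwd : roelcke_precompact t lt -> forall J : T -> Prop, proper_regular_interval lt J ->
        roelcke_precompact t (@sub_lt T lt J) /\ roelcke_precompact Tpartial (@quot_lt T lt J)).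
  { intros RP J HJ. destruct (J_witness T lt J HJ) as [j0 Hj0]. split.
    - apply (partA T lt Hc Hh J HJ j0 Hj0 t RP).
    - apply (partB T lt Hc Hh J HJ j0 Hj0 t RP). }
  assert (Bwd : forall J : T -> Prop, proper_regular_interval lt J ->
        roelcke_precompact t (@sub_lt T lt J) -> roelcke_precompact Tpartial (@quot_lt T lt J) ->
        roelcke_precompact t lt).
  { intros J HJ R1 R2. destruct (J_witness T lt J HJ) as [j0 Hj0].
    apply (partC T lt Hc Hh J HJ j0 Hj0 t R1 R2). }
  split; split.
  - apply Fwd.
  - intros H. destruct (H J0 HJ0) as [R1 R2]. apply (Bwd J0); auto.
  - intros RP. exists J0. split; [auto | apply Fwd; auto].
  - intros [J [HJ [R1 R2]]]. apply (Bwd J); auto.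
Qed.
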